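(* Let $M$ be an $n\times n$ Hermitian positive definite matrix which is irreducible. If the argument of each non-zero off-diagonal entry of $-M$ lies in $\left(-\frac{\pi}{2^n},\frac{\pi}{2^n}\right)$, then each entry of $M^{-1}$ has argument in $\left(-\frac{\pi}{2}+\frac{\pi}{2^n},\ \frac{\pi}{2}-\frac{\pi}{2^n}\right)$.
   Context: A square matrix is irreducible if it cannot be brought into block-diagonal form (with at least two diagonal blocks) by a simultaneous permutation of its rows and columns. *)

(* Defs.v *)
From HB Require Import structures.
From mathcomp Require Import all_boot all_order all_algebra all_fingroup.
From mathcomp Require Import complex.
From mathcomp Require Import reals trigo.
Set Implicit Arguments. Unset Strict Implicit. Unset Printing Implicit Defensive.
Import Order.TTheory GRing.Theory Num.Theory.
Local Open Scope ring_scope.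

(* Principal argument of z = a + i b in (-pi, pi]:
   Arg z = acos (a/|z|) if b >= 0, and - acos (a/|z|) if b < 0.
   (Its value at z = 0 is irrelevant: we always require z != 0.) *)
Definition Arg {R : realType} (z : R[i]) : R :=
  let r := Num.sqrt (complex.Re z ^+ 2 + complex.Im z ^+ 2) in
  if 0 <= complex.Im z then acos (complex.Re z / r) else - acos (complex.Re z / r).

Definition arg_in {R : realType} (z : R[i]) (a b : R) : Prop :=
  z != 0 /\ a < Arg z < b.

Definition adjmx {R : realType} (n : nat) (M : 'M[R[i]]_n) : 'M[R[i]]_n :=
  (map_mx (@conjc R) M)^T.

Definition hermitian_mx {R : realType} (n : nat) (M : 'M[R[i]]_n) : Prop :=
  adjmx M = M.

(* x^* M x is a positive real for every non-zero x (0 < w in R[i] means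
   w is real and positive). *)
Definition posdef_mx {R : realType} (n : nat) (M : 'M[R[i]]_n) : Prop :=
  forall x : 'cV[R[i]]_n, x != 0 ->
    0 < ((map_mx (@conjc R) x)^T *m M *m x) 0 0.

(* M is reducible_mx iff, after a simultaneous permutation s of rows and
   columns, it is block diagonal with (at least) two diagonal blocks, of sizes
   k and n - k with 0 < k < n: every entry (i, j) of the permuted matrix with
   i, j in different blocks is zero. *)
Definition reducible_mx {R : realType} (n : nat) (M : 'M[R[i]]_n) : Prop :=
  exists (s : 'S_n) (k : nat), (0 < k < n)%N /\
    forall i j : 'I_n, (i < k)%N != (j < k)%N ->
      col_perm s (row_perm s M) i j = 0.

Definition irreducible_mx {R : realType} (n : nat) (M : 'M[R[i]]_n) : Prop :=
  ~ reducible_mx M.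

(* Main.v *)
Require Import Defs.
From HB Require Import structures.
From mathcomp Require Import all_boot all_order all_algebra all_fingroup.
From mathcomp Require Import complex.
From mathcomp Require Import reals trigo.
From mathcomp Require Import ring lra zify.
Import Order.TTheory GRing.Theory Num.Theory.
Local Open Scope ring_scope.
Set Implicit Arguments. Unset Strict Implicit. Unset Printing Implicit Defensive.



Section Cone.
Variable R : realType.
Local Notation C := R[i].

Definition nrm (z : C) : R := Num.sqrt (complex.Re z ^+ 2 + complex.Im z ^+ 2).
Definition cone (a : R) (z : C) : Prop := cos a * nrm z <= complex.Re z.

Lemma nrm_ge0 z : 0 <= nrm z.
Proof. exact: sqrtr_ge0. Qed.

Lemma nrm_sqr z : nrm z ^+ 2 = complex.Re z ^+ 2 + complex.Im z ^+ 2.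
Proof. by rewrite sqr_sqrtr // addr_ge0 // sqr_ge0. Qed.

Lemma nrm_eq0 z : nrm z = 0 -> z = 0.
Proof.
case: z => x y; rewrite /nrm /= => /eqP; rewrite sqrtr_eq0 => H.
have hx : 0 <= x ^+ 2 by apply: sqr_ge0.
have hy : 0 <= y ^+ 2 by apply: sqr_ge0.
have ex : x ^+ 2 = 0 by lra.
have ey : y ^+ 2 = 0 by lra.
move/eqP: ex; rewrite sqrf_eq0 => /eqP ->.
by move/eqP: ey; rewrite sqrf_eq0 => /eqP ->.
Qed.


Lemma abs_le_sqr (p q : R) : 0 <= q -> p ^+ 2 <= q ^+ 2 -> `|p| <= q.
Proof.
move=> q0 h; rewrite -sqrtr_sqr -(ger0_norm q0) -sqrtr_sqr.
by rewrite ler_sqrt // sqr_ge0.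
Qed.

Lemma Re_le_nrm z : `|complex.Re z| <= nrm z.
Proof.
apply: abs_le_sqr; first exact: nrm_ge0.
by rewrite nrm_sqr lerDl sqr_ge0.
Qed.

Lemma Im_le_nrm z : `|complex.Im z| <= nrm z.
Proof.
apply: abs_le_sqr; first exact: nrm_ge0.
by rewrite nrm_sqr lerDr sqr_ge0.
Qed.

Lemma nrm_normc z : `|z| = (nrm z)%:C%C.
Proof. by rewrite normc_def. Qed.

Lemma nrmD z w : nrm (z + w) <= nrm z + nrm w.
Proof.
have := ler_normD z w; rewrite !nrm_normc -rmorphD /=.
by rewrite lecR.
Qed.

Lemma nrmM z w : nrm (z * w) = nrm z * nrm w.
Proof.
case: z => a b; case: w => c d; rewrite /nrm /= -sqrtrM ?addr_ge0 ?sqr_ge0 //.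
congr Num.sqrt; ring.
Qed.

Lemma nrm_conj z : nrm (conjc z) = nrm z.
Proof. by case: z => a b; rewrite /nrm /= sqrrN. Qed.

Lemma cone0 a : cone a 0.
Proof. by rewrite /cone /nrm /= expr0n /= addr0 sqrtr0 mulr0. Qed.

Lemma cone_mono a b z : 0 <= a -> a <= b -> b <= pi -> cone a z -> cone b z.
Proof.
move=> a0 ab bpi; rewrite /cone => h; apply: le_trans h.
apply: ler_wpM2r; first exact: nrm_ge0.
have [->|ltab] := eqVneq a b; first by [].
have lt : a < b by rewrite lt_neqAle ltab.
apply: ltW; rewrite ltr_cos //.
  by rewrite in_itv /= a0 (le_trans ab bpi).
by rewrite in_itv /= bpi (le_trans a0 ab).
Qed.

Lemma cone_add a z w : 0 <= cos a -> cone a z -> cone a w -> cone a (z + w).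
Proof.
rewrite /cone => c0 hz hw.
have -> : complex.Re (z + w) = complex.Re z + complex.Re w by case: (z) ; case: (w).
apply: le_trans (lerD hz hw); rewrite -mulrDr.
by apply: ler_wpM2l => //; exact: nrmD.
Qed.

Lemma cone_sum a (I : finType) (P : pred I) (F : I -> C) :
  0 <= cos a -> (forall i, P i -> cone a (F i)) -> cone a (\sum_(i | P i) F i).
Proof.
move=> c0 h; apply: (big_ind (cone a)); [exact: cone0| |by []].
by move=> x y; apply: cone_add.
Qed.

Lemma Re_sum (I : finType) (P : pred I) (F : I -> C) :
  complex.Re (\sum_(i | P i) F i) = \sum_(i | P i) complex.Re (F i).
Proof.
apply: (big_morph (@complex.Re R)); last by [].
by move=> x y; case: x; case: y.
Qed.

Lemma cone_Re_gt0 a z : 0 < cos a -> cone a z -> z != 0 -> 0 < complex.Re z.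
Proof.
rewrite /cone => c0 h nz; apply: lt_le_trans h; apply: mulr_gt0 => //.
rewrite lt_neqAle nrm_ge0 andbT eq_sym; apply/eqP => /nrm_eq0 /eqP.
by rewrite (negbTE nz).
Qed.

Lemma cone_sum_neq0 a (I : finType) (F : I -> C) (k : I) :
  0 < cos a -> (forall i, cone a (F i)) -> F k != 0 -> \sum_i F i != 0.
Proof.
move=> c0 h nz; apply/eqP => e.
have : complex.Re (\sum_i F i) = 0 by rewrite e.
rewrite Re_sum (bigD1 k) //=.
have h1 := cone_Re_gt0 c0 (h k) nz.
have h2 : 0 <= \sum_(i | i != k) complex.Re (F i).
  apply: sumr_ge0 => i _; apply: le_trans (h i).
  by apply: mulr_ge0; [exact: ltW|exact: nrm_ge0].
lra.
Qed.

Lemma cone_conj a z : cone a z -> cone a (conjc z).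
Proof. by rewrite /cone nrm_conj; case: z. Qed.

Lemma cone_mul a b z w : 0 <= a <= pi / 2 -> 0 <= b <= pi / 2 ->
  cone a z -> cone b w -> cone (a + b) (z * w).
Proof.
move=> ha hb; rewrite /cone nrmM cosD.
have ca : 0 <= cos a by apply: cos_ge0_pihalf; case/andP: ha => h1 h2; rewrite h2 andbT; lra.
have cb : 0 <= cos b by apply: cos_ge0_pihalf; case/andP: hb => h1 h2; rewrite h2 andbT; lra.
have sa : 0 <= sin a.
  apply: sin_ge0_pi; case/andP: ha => h1 h2; rewrite h1 /=; have := pi_gt0 R; lra.
have sb : 0 <= sin b.
  apply: sin_ge0_pi; case/andP: hb => h1 h2; rewrite h1 /=; have := pi_gt0 R; lra.
have csa := cos2Dsin2 a; have csb := cos2Dsin2 b.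
have r1 := nrm_ge0 z; have r2 := nrm_ge0 w.
have q1 := nrm_sqr z; have q2 := nrm_sqr w.
have -> : complex.Re (z * w) = complex.Re z * complex.Re w - complex.Im z * complex.Im w.
  by case: (z); case: (w).
move: (nrm z) (nrm w) r1 r2 q1 q2 => r s r1 r2 q1 q2 hz hw.
move: (complex.Re z) (complex.Im z) (complex.Re w) (complex.Im w) hz hw q1 q2.
move=> x1 y1 x2 y2 hz hw q1 q2.
have x1p : 0 <= x1 by apply: le_trans hz; apply: mulr_ge0.
have x2p : 0 <= x2 by apply: le_trans hw; apply: mulr_ge0.
have e1 : `|y1| <= sin a * r.
  apply: abs_le_sqr; first exact: mulr_ge0.
  have : (cos a * r) ^+ 2 <= x1 ^+ 2 by rewrite ler_sqr // nnegrE mulr_ge0.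
  move: csa; rewrite !exprMn => csa h; nra.
have e2 : `|y2| <= sin b * s.
  apply: abs_le_sqr; first exact: mulr_ge0.
  have : (cos b * s) ^+ 2 <= x2 ^+ 2 by rewrite ler_sqr // nnegrE mulr_ge0.
  move: csb; rewrite !exprMn => csb h; nra.
have f1 : cos a * r * (cos b * s) <= x1 * x2.
  by apply: ler_pM => //; apply: mulr_ge0.
have f2 : y1 * y2 <= sin a * r * (sin b * s).
  apply: le_trans (ler_norm _) _; rewrite normrM.
  by apply: ler_pM => //; apply: normr_ge0.
lra.
Qed.

Lemma cone_pos (e : C) : 0 < e -> cone 0 e /\ e != 0.
Proof.
case: e => x y; rewrite ltcE /= => /andP [/eqP hy hx]; subst y; split.
  rewrite /cone /nrm /= cos0 mul1r (_ : 0 ^+ 2 = 0 :> R) ?addr0; last by rewrite expr2 mulr0.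
  by rewrite sqrtr_sqr ger0_norm // ltW.
by apply/eqP => -[] hx0; move: hx; rewrite hx0 ltxx.
Qed.

End Cone.


Section Conv.
Variable R : realType.
Local Notation C := R[i].

Definition gang (z : C) : R := acos (complex.Re z / nrm z).

Lemma nrm_gt0 (z : C) : z != 0 -> 0 < nrm z.
Proof.
move=> nz; rewrite lt_neqAle nrm_ge0 andbT eq_sym; apply/eqP => /nrm_eq0 /eqP.
by rewrite (negbTE nz).
Qed.

Lemma ratio_itv (z : C) : z != 0 -> -1 <= complex.Re z / nrm z <= 1.
Proof.
move=> nz; have r0 := nrm_gt0 nz; have := Re_le_nrm z.
rewrite ler_norml => /andP [h1 h2].
by rewrite ler_pdivlMr // ler_pdivrMr // mulN1r mul1r h1 h2.
Qed.

Lemma gang_ge0 (z : C) : z != 0 -> 0 <= gang z.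
Proof. by move=> nz; apply: acos_ge0; exact: ratio_itv. Qed.

Lemma gang_lepi (z : C) : z != 0 -> gang z <= pi.
Proof. by move=> nz; apply: acos_lepi; exact: ratio_itv. Qed.

Lemma cone_gang (z : C) : z != 0 -> cone (gang z) z.
Proof.
move=> nz; rewrite /cone /gang acosK; last by rewrite in_itv /=; exact: ratio_itv.
by rewrite divfK // gt_eqF // nrm_gt0.
Qed.

Lemma arg_in_gang (z : C) (a : R) : arg_in z (- a) a -> gang z < a.
Proof.
rewrite /arg_in /Arg /gang -/(nrm z) => -[_].
case: ifP => _ /andP [h1 h2] //; lra.
Qed.

Lemma gang_arg_in (z : C) (b : R) : z != 0 -> 0 <= b -> b <= pi ->
  cos b * nrm z < complex.Re z -> arg_in z (- b) b.
Proof.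
move=> nz b0 bpi h; have r0 := nrm_gt0 nz.
have g0 := gang_ge0 nz; have gpi := gang_lepi nz.
have hg : gang z < b.
  rewrite ltNge; apply/negP => hb.
  have hc : cos (gang z) <= cos b.
    have [->|ne] := eqVneq (gang z) b; first by [].
    apply: ltW; rewrite ltr_cos ?in_itv /= ?g0 ?gpi ?b0 ?bpi //.
    by rewrite lt_neqAle eq_sym ne hb.
  move: hc; rewrite /gang acosK; last by rewrite in_itv /=; exact: ratio_itv.
  rewrite ler_pdivrMr // => hc; lra.
split => //; rewrite /Arg -/(nrm z) -/(gang z).
by case: ifP => _; apply/andP; split; lra.
Qed.

End Conv.


Section Mx.
Variable R : realType.
Local Notation C := R[i].

Lemma herm_entry n (M : 'M[C]_n) i j : hermitian_mx M -> M i j = conjc (M j i).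
Proof. by move=> h; rewrite -{1}h /adjmx !mxE. Qed.

Lemma adj_mul n (x : 'cV[C]_n) (P : 'M[C]_n) : hermitian_mx P ->
  (map_mx (@conjc R) (P *m x))^T = (map_mx (@conjc R) x)^T *m P.
Proof.
by move=> h; rewrite map_mxM trmx_mul; congr (_ *m _); exact: h.
Qed.

Lemma posdef_unit n (P : 'M[C]_n) : posdef_mx P -> P \in unitmx.
Proof.
move=> hP; case: (boolP (P \in unitmx)) => // nu; exfalso.
have knz : kermx P != 0 by rewrite kermx_eq0 row_free_unit; exact: nu.
have [i ri] : exists i, row i (kermx P) != 0.
  case: (pickP (fun i => row i (kermx P) != 0)) => [i ri|H]; first by exists i.
  exfalso; move/negP: knz; apply; apply/eqP/row_matrixP => i; rewrite row0.
  by apply/eqP; move: (H i) => /= /negbFE.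
set v := row i (kermx P).
have vP : v *m P = 0 by rewrite /v -row_mul mulmx_ker row0.
set x := (map_mx (@conjc R) v)^T.
have xv : (map_mx (@conjc R) x)^T = v.
  by apply/matrixP => a b; rewrite !mxE conjcK.
have xnz : x != 0.
  apply/eqP => x0; move/eqP: ri; apply.
  rewrite -/v -xv x0; apply/matrixP => a b; rewrite !mxE; exact: conjc0.
have := hP x xnz; by rewrite xv vP mul0mx mxE ltxx.
Qed.

Lemma posdef_inv n (P Q : 'M[C]_n) : hermitian_mx P -> posdef_mx P ->
  P *m Q = 1%:M -> posdef_mx Q.
Proof.
move=> hh hP PQ x xnz.
set y := Q *m x.
have xe : x = P *m y by rewrite /y mulmxA PQ mul1mx.
have ynz : y != 0.
  by apply: contraNneq xnz => y0; rewrite xe y0 mulmx0.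
have := hP y ynz.
have -> : (map_mx (@conjc R) x)^T *m Q *m x = (map_mx (@conjc R) y)^T *m P *m y.
  rewrite {1}xe adj_mul // /y.
  by rewrite !mulmxA.
by [].
Qed.

Lemma herm_inv n (P : 'M[C]_n) : hermitian_mx P -> hermitian_mx (invmx P).
Proof.
move=> h; rewrite /hermitian_mx /adjmx.
by rewrite (map_invmx (@conjc R)) trmx_inv; congr invmx; exact: h.
Qed.

Lemma posdef_diag n (P : 'M[C]_n) i : posdef_mx P -> 0 < P i i.
Proof.
move=> hP; set x : 'cV[C]_n := delta_mx i 0.
have xnz : x != 0.
  apply/negP => /eqP /matrixP /(_ i 0). rewrite !mxE !eqxx /=.
  move/eqP; by rewrite oner_eq0.
have := hP x xnz.
have -> : (map_mx (@conjc R) x)^T = delta_mx 0 i.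
  apply/matrixP => a b; rewrite !mxE andbC; exact: conjc_nat.
by rewrite -rowE /x -colE !mxE.
Qed.

End Mx.


Section Schur.
Variable R : realType.
Local Notation C := R[i].
Variable m : nat.
Variable M : 'M[C]_m.+2.
Hypothesis Mu : M \in unitmx.
Local Notation L := (@ord_max m.+1).
Local Notation li := (lift (@ord_max m.+1)).
Hypothesis dnz : M L L != 0.

Definition schur : 'M[C]_m.+1 :=
  \matrix_(i, j) (M (li i) (li j) - M (li i) L * M L (li j) / M L L).
Definition subX : 'M[C]_m.+1 := \matrix_(i, j) invmx M (li i) (li j).

Lemma sum_split (F : 'I_m.+2 -> C) :
  \sum_(k < m.+2) F k = F L + \sum_(k < m.+1) F (li k).
Proof. by rewrite (bigD1_ord L). Qed.

Lemma MX a c : M L L * 0 + \sum_(k < m.+2) M a k * invmx M k c = (a == c)%:R.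
Proof.
have := mulmxV Mu; move/matrixP => /(_ a c); rewrite !mxE => <-.
by rewrite mulr0 add0r.
Qed.

Lemma MX' a c : \sum_(k < m.+2) M a k * invmx M k c = (a == c)%:R.
Proof. by have := MX a c; rewrite mulr0 add0r. Qed.

Lemma schur_subX : schur *m subX = 1%:M.
Proof.
apply/matrixP => i j; rewrite !mxE.
have h1 := MX' (li i) (li j); have h2 := MX' L (li j).
rewrite sum_split in h1; rewrite sum_split in h2.
rewrite (inj_eq (@lift_inj _ _)) in h1.
rewrite (negbTE (neq_lift _ _)) in h2.
have -> : \sum_(k < m.+1) schur i k * subX k j =
  \sum_(k < m.+1) M (li i) (li k) * invmx M (li k) (li j)
  - (M (li i) L / M L L) * \sum_(k < m.+1) M L (li k) * invmx M (li k) (li j).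
  rewrite mulr_sumr -sumrB; apply: eq_bigr => k _; rewrite !mxE; ring.
move: h1 h2.
set A := \sum_(k < m.+1) _.
set B := \sum_(k < m.+1) _.
move=> h1 h2.
have eA : A = (i == j)%:R - M (li i) L * invmx M L (li j) by rewrite -h1; ring.
have eB : B = false%:R - M L L * invmx M L (li j) by rewrite -h2; ring.
rewrite eA eB mulr0n; field; exact: dnz.
Qed.

Lemma schur_col i :
  \sum_(k < m.+1) schur i k * invmx M (li k) L = - (M (li i) L / M L L).
Proof.
have h1 := MX' (li i) L; have h2 := MX' L L.
rewrite sum_split in h1; rewrite sum_split in h2.
rewrite eq_sym (negbTE (neq_lift _ _)) in h1; rewrite eqxx in h2.
have -> : \sum_(k < m.+1) schur i k * invmx M (li k) L =
  \sum_(k < m.+1) M (li i) (li k) * invmx M (li k) L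
  - (M (li i) L / M L L) * \sum_(k < m.+1) M L (li k) * invmx M (li k) L.
  rewrite mulr_sumr -sumrB; apply: eq_bigr => k _; rewrite !mxE; ring.
move: h1 h2.
set A := \sum_(k < m.+1) _.
set B := \sum_(k < m.+1) _.
move=> h1 h2.
have eA : A = false%:R - (M (li i) L * invmx M L L) by rewrite -h1; ring.
have eB : B = true%:R - M L L * invmx M L L by rewrite -h2; ring.
rewrite eA eB mulr0n mulr1n; field; exact: dnz.
Qed.

Lemma schur_unit : schur \in unitmx.
Proof. by case: (mulmx1_unit schur_subX). Qed.

Lemma subX_inv : invmx schur = subX.
Proof.
by rewrite -[LHS]mulmx1 -schur_subX mulmxA mulVmx ?mul1mx //; exact: schur_unit.
Qed.

Lemma X_col i :
  invmx M (li i) L = \sum_(k < m.+1) subX i k * (- M (li k) L) * (M L L)^-1.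
Proof.
set w : 'cV[C]_m.+1 := \col_k invmx M (li k) L.
set v : 'cV[C]_m.+1 := \col_k (- (M (li k) L / M L L)).
have Nw : schur *m w = v.
  by apply/matrixP => a b; rewrite !mxE -schur_col; apply: eq_bigr => k _; rewrite !mxE.
have : w = subX *m v by rewrite -Nw mulmxA (mulmx1C schur_subX) mul1mx.
move/matrixP => /(_ i 0); rewrite !mxE => ->.
by apply: eq_bigr => k _; rewrite !mxE; ring.
Qed.

End Schur.


Section Step.
Variable R : realType.
Local Notation C := R[i].

Definition conn n (M : 'M[C]_n) : Prop := forall S : {set 'I_n},
  S != set0 -> S != setT -> exists i j, [/\ i \in S, j \notin S & M i j != 0].

Lemma posdef_compress k n (S : 'M[C]_(k, n)) (P : 'M[C]_n) :
  map_mx (@conjc R) S = S -> S *m S^T = 1%:M -> posdef_mx P ->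
  posdef_mx (S *m P *m S^T).
Proof.
move=> hS SS hP x xnz.
set y := S^T *m x.
have ynz : y != 0.
  by apply: contraNneq xnz => y0; rewrite -(mul1mx x) -SS -mulmxA -/y y0 mulmx0.
have := hP y ynz.
have -> : (map_mx (@conjc R) y)^T = (map_mx (@conjc R) x)^T *m S.
  by rewrite /y map_mxM trmx_mul -map_trmx trmxK hS.
by rewrite /y !mulmxA.
Qed.

Lemma cone_add_neq0 a (z w : C) : 0 < cos a -> cone a z -> cone a w ->
  z != 0 \/ w != 0 -> z + w != 0.
Proof.
move=> c0 hz hw nz.
have Rz : 0 <= complex.Re z.
  by apply: le_trans hz; apply: mulr_ge0; [exact: ltW|exact: nrm_ge0].
have Rw : 0 <= complex.Re w.
  by apply: le_trans hw; apply: mulr_ge0; [exact: ltW|exact: nrm_ge0].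
have : 0 < complex.Re (z + w).
  have -> : complex.Re (z + w) = complex.Re z + complex.Re w by case: (z); case: (w).
  case: nz => nz.
    have := cone_Re_gt0 c0 hz nz; lra.
  have := cone_Re_gt0 c0 hw nz; lra.
by apply: contraTneq => ->; rewrite /= ltxx.
Qed.


Definition IHprop m := forall (t : R) (N : 'M[C]_m.+1), 0 <= t ->
  2 ^+ m * t <= pi / 2 -> hermitian_mx N -> posdef_mx N -> conn N ->
  (forall i j, i != j -> cone t (- N i j)) ->
  forall i j, i != j -> invmx N i j != 0 /\ cone ((2 ^+ m - 1) * t) (invmx N i j).

Lemma IH0 : IHprop 0.
Proof. by move=> t N _ _ _ _ _ _ i j; rewrite !ord1 eqxx. Qed.

Section StepS.
Variable m : nat.
Hypothesis IH : IHprop m.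
Variable t : R.
Variable M : 'M[C]_m.+2.
Hypothesis ht0 : 0 <= t.
Hypothesis ht : 2 ^+ m.+1 * t <= pi / 2.
Hypothesis hH : hermitian_mx M.
Hypothesis hP : posdef_mx M.
Hypothesis hconn : conn M.
Hypothesis hcone : forall i j, i != j -> cone t (- M i j).
Local Notation L := (@ord_max m.+1).
Local Notation li := (lift (@ord_max m.+1)).

Let dpos : 0 < M L L := posdef_diag L hP.
Let dnz : M L L != 0 := negbT (gt_eqF dpos).
Let Mu : M \in unitmx := posdef_unit hP.
Let hX : hermitian_mx (invmx M) := herm_inv hH.
Let XPD : posdef_mx (invmx M) := posdef_inv hH hP (mulmxV Mu).

Let Sel : 'M[C]_(m.+1, m.+2) := rowsub li 1%:M.

Lemma subX_sel : subX M = Sel *m invmx M *m Sel^T.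
Proof.
rewrite -[Sel *m _ *m _]trmxK trmx_mul trmxK /Sel !mul_rowsub_mx !mul1mx.
by apply/matrixP => i j; rewrite !mxE.
Qed.

Lemma Sel_conj : map_mx (@conjc R) Sel = Sel.
Proof. by apply/matrixP => i j; rewrite !mxE conjc_nat. Qed.

Lemma Sel_T : Sel *m Sel^T = 1%:M.
Proof.
rewrite /Sel mul_rowsub_mx mul1mx; apply/matrixP => i j; rewrite !mxE.
by rewrite (inj_eq (@lift_inj _ _)) eq_sym.
Qed.

Let ZPD : posdef_mx (subX M).
Proof. by rewrite subX_sel; apply: posdef_compress; [exact: Sel_conj|exact: Sel_T|]. Qed.

Let Zherm : hermitian_mx (subX M).
Proof. by apply/matrixP => i j; rewrite /adjmx !mxE -(herm_entry _ _ hX). Qed.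

Let NPD : posdef_mx (schur M).
Proof. by apply: (posdef_inv Zherm ZPD); apply: mulmx1C; exact: schur_subX. Qed.

Let Nherm : hermitian_mx (schur M).
Proof.
apply/matrixP => i j; rewrite /adjmx !mxE.
rewrite rmorphB /= !rmorphM /= fmorphV /= -!(herm_entry _ _ hH); ring.
Qed.

Let p1 : 1 <= (2 : R) ^+ m.
Proof. by apply: exprn_ege1; rewrite ler1n. Qed.
Let ht2 : 2 * 2 ^+ m * t <= pi / 2.
Proof. by rewrite -exprS. Qed.
Let pi0 : 0 < pi :> R.
Proof. exact: pi_gt0. Qed.
Let pt : t <= 2 ^+ m * t.
Proof. by rewrite -{1}(mul1r t) ler_wpM2r. Qed.
Let t2pi : t + t <= pi / 2.
Proof.
apply: le_trans ht2; rewrite -mulrA; have := pt; lra.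
Qed.
Let tpi : t <= pi / 2.
Proof. by apply: le_trans t2pi; rewrite lerDl. Qed.

Lemma Ncone i j : i != j -> cone (t + t) (- schur M i j).
Proof.
move=> ij.
have -> : - schur M i j = (- M (li i) (li j)) + (- M (li i) L) * (- M L (li j)) * (M L L)^-1.
  by rewrite mxE; ring.
have c0 : 0 <= cos (t + t).
  apply: cos_ge0_pihalf; rewrite t2pi andbT.
  have h1 := ht0; have h2 := pi_gt0 R; lra.
apply: cone_add c0 _ _.
  apply: (cone_mono (a:=t)); [by []|have := ht0; lra|have := pi_gt0 R; have := ht0; have := t2pi; lra|].
  by apply: hcone; rewrite (inj_eq (@lift_inj _ _)).
rewrite -[t + t]addr0; apply: cone_mul.
- by rewrite t2pi andbT; have := ht0; lra.
- by rewrite lexx /=; have := pi_gt0 R; lra.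
- apply: cone_mul; try by rewrite tpi ht0.
    by apply: hcone; rewrite eq_sym neq_lift.
  by apply: hcone; rewrite neq_lift.
- by have [] : cone 0 (M L L)^-1 /\ (M L L)^-1 != 0 by apply: cone_pos; rewrite invr_gt0.
Qed.

Lemma Nparts i j : i != j ->
  cone (t + t) (- M (li i) (li j)) /\
  cone (t + t) ((- M (li i) L) * (- M L (li j)) * (M L L)^-1).
Proof.
move=> ij; split.
  apply: (cone_mono (a:=t)); [by []|have := ht0; lra|have := pi_gt0 R; have := ht0; have := t2pi; lra|].
  by apply: hcone; rewrite (inj_eq (@lift_inj _ _)).
rewrite -[t + t]addr0; apply: cone_mul.
- by rewrite t2pi andbT; have := ht0; lra.
- by rewrite lexx /=; have := pi_gt0 R; lra.
- apply: cone_mul; try by rewrite tpi ht0.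
    by apply: hcone; rewrite eq_sym neq_lift.
  by apply: hcone; rewrite neq_lift.
- by have [] : cone 0 (M L L)^-1 /\ (M L L)^-1 != 0 by apply: cone_pos; rewrite invr_gt0.
Qed.

Lemma Nnz i j : i != j -> 0 < cos (t + t) ->
  (M (li i) (li j) != 0 \/ (M (li i) L != 0 /\ M L (li j) != 0)) ->
  schur M i j != 0.
Proof.
move=> ij c0 h; have [h1 h2] := Nparts ij.
have -> : schur M i j = - ((- M (li i) (li j)) + (- M (li i) L) * (- M L (li j)) * (M L L)^-1).
  by rewrite mxE; ring.
rewrite oppr_eq0; apply: (cone_add_neq0 c0 h1 h2).
case: h => [h|[ha hb]]; [left|right]; first by rewrite oppr_eq0.
by rewrite !mulf_neq0 ?oppr_eq0 ?invr_eq0.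
Qed.

Lemma Nconn : conn (schur M).
Proof.
move=> S S0 ST.
have [x xS] := set0Pn _ S0.
have [y yS] : exists y, y \notin S.
  case: (pickP (fun y => y \notin S)) => [y hy|H]; first by exists y.
  exfalso; move/eqP: ST; apply; apply/setP => z; rewrite inE; exact: (negbFE (H z)).
have m1 : (0 < m)%N.
  rewrite lt0n; apply/negP => /eqP m0.
  have : x = y.
    have hx : (x < 1)%N by apply: (leq_trans (ltn_ord x)); rewrite m0.
    have hy : (y < 1)%N by apply: (leq_trans (ltn_ord y)); rewrite m0.
    apply: ord_inj; move: hx hy; rewrite !ltnS !leqn0 => /eqP -> /eqP ->.
    by [].
  by move=> exy; move: yS; rewrite -exy xS.
have c0 : 0 < cos (t + t).
  apply: cos_gt0_pihalf.
  have h2 : 2 <= (2 : R) ^+ m.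
    by rewrite -(prednK m1) exprS ler_peMr // exprn_ege1 // ler1n.
  have : 2 * t <= 2 ^+ m * t by apply: ler_wpM2r.
  move: ht2; rewrite -mulrA => ht2' h3.
  have := ht0; have := pi_gt0 R; lra.
pose S' := [set li k | k in S].
have S'0 : S' != set0 by apply/set0Pn; exists (li x); rewrite mem_imset //; exact: lift_inj.
have LS' : L \notin S'.
  by apply/imsetP => -[k _ e]; move: (neq_lift L k); rewrite -e eqxx.
have S'T : S' != setT by apply: contraNneq LS' => ->; rewrite inE.
have [a [b [aS bS ab]]] := hconn S'0 S'T.
case/imsetP: aS => i iS ea; subst a.
case: (unliftP L b) => [j ej|eb]; subst b.
  have jS : j \notin S by move: bS; rewrite mem_imset //; exact: lift_inj.
  exists i, j; split => //; apply: Nnz => //; first by apply: contraNneq jS => <-.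
  by left.
pose S'' := L |: S'.
have S''0 : S'' != set0 by apply/set0Pn; exists L; rewrite !inE eqxx.
have yS'' : li y \notin S''.
  rewrite !inE negb_or eq_sym neq_lift /= mem_imset //; exact: lift_inj.
have S''T : S'' != setT by apply: contraNneq yS'' => ->; rewrite inE.
have [a' [b' [aS' bS' ab']]] := hconn S''0 S''T.
case: (unliftP L b') => [j ej|eb]; subst b'; last by move: bS'; rewrite !inE eqxx.
have jS : j \notin S.
  by move: bS'; rewrite !inE negb_or => /andP [_]; rewrite mem_imset //; exact: lift_inj.
move: aS'; rewrite !inE => /orP [/eqP ea|].
  subst a'; exists i, j; split => //; apply: Nnz => //; first by apply: contraNneq jS => <-.
  by right.
case/imsetP => i' i'S ea; subst a'.
exists i', j; split => //; apply: Nnz => //; first by apply: contraNneq jS => <-.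
by left.
Qed.

Let A := (2 ^+ m - 1) * (t + t).
Let T := (2 ^+ m.+1 - 1) * t.
Let A0 : 0 <= A.
Proof. by apply: mulr_ge0; [rewrite subr_ge0|have := ht0; lra]. Qed.
Let AtT : A + t = T.
Proof. by rewrite /A /T exprS; ring. Qed.
Let Tpi : T < pi / 2.
Proof.
rewrite /T exprS; move: ht2; rewrite -mulrA => h.
have := ht0; have := pi_gt0 R; have := pt.
have [->|tn0] := eqVneq t 0; first by rewrite !mulr0; lra.
have tp : 0 < t by rewrite lt_neqAle eq_sym tn0 ht0.
move: tp; lra.
Qed.
Let T0 : 0 <= T.
Proof. by rewrite -AtT; have := A0; have := ht0; lra. Qed.

Lemma Zfacts i k : invmx (schur M) i k != 0 /\ cone A (invmx (schur M) i k).
Proof.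
have [->|ik] := eqVneq i k.
  have pos : 0 < invmx (schur M) k k.
    by rewrite (subX_inv Mu dnz) mxE; apply: posdef_diag.
  have [h1 h2] := cone_pos pos; split => //.
  apply: (cone_mono (a:=0)); [exact: lexx|exact: A0| |exact: h1].
  by have := Tpi; have := AtT; have := ht0; have := pi_gt0 R; lra.
apply: IH => //.
- by have := ht0; lra.
- by move: ht2; rewrite -mulrA; lra.
- exact: Nconn.
- by move=> a b ab; have := Ncone ab.
Qed.

Lemma Xcol i : invmx M (li i) L != 0 /\ cone T (invmx M (li i) L).
Proof.
rewrite (X_col Mu dnz) -(subX_inv Mu dnz).
have c0 : 0 < cos T by apply: cos_gt0_pihalf; rewrite Tpi andbT; have := T0; have := pi_gt0 R; lra.
have term : forall k, cone T (invmx (schur M) i k * - M (li k) L / M L L).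
  move=> k; rewrite -AtT -[A + t]addr0; apply: cone_mul.
  - by rewrite AtT T0 ltW.
  - by rewrite lexx /=; have := pi_gt0 R; lra.
  - apply: cone_mul; first by rewrite A0 /=; have := Tpi; have := AtT; have := ht0; lra.
      by rewrite ht0 tpi.
      by have [] := Zfacts i k.
    by apply: hcone; rewrite eq_sym neq_lift.
  by have [] : cone 0 (M L L)^-1 /\ (M L L)^-1 != 0 by apply: cone_pos; rewrite invr_gt0.
split; last by apply: cone_sum; [exact: ltW c0|move=> k _; exact: term].
have [a [b [aS bS ab]]] : exists a b, [/\ a \in [set L], b \notin [set L] & M a b != 0].
  apply: hconn; first by apply/set0Pn; exists L; rewrite inE.
  apply/eqP => /setP /(_ (li ord0)); rewrite !inE eq_sym (negbTE (neq_lift _ _)) //.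
move: aS; rewrite inE => /eqP ea; subst a.
case: (unliftP L b) => [k ek|eb]; subst b; last by move: bS; rewrite inE eqxx.
apply: (cone_sum_neq0 (k:=k) c0 term).
rewrite !mulf_neq0 ?invr_eq0 ?oppr_eq0 //; first by have [] := Zfacts i k.
by rewrite (herm_entry _ _ hH) conjc_eq0.
Qed.

Lemma step_main a b : a != b -> invmx M a b != 0 /\ cone T (invmx M a b).
Proof.
case: (unliftP L a) => [i ->|->]; case: (unliftP L b) => [j ->|->].
- move=> ij; have ij' : i != j by apply: contraNneq ij => ->.
  have [h1 h2] := Zfacts i j.
  move: h1 h2; rewrite (subX_inv Mu dnz) mxE => h1 h2; split => //.
  apply: (cone_mono (a:=A)); [exact: A0|by have := ht0; have := AtT; lra| |exact: h2].
  by have := Tpi; have := pi_gt0 R; lra.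
- by move=> _; exact: Xcol.
- move=> _; rewrite (herm_entry _ _ hX); have [h1 h2] := Xcol j.
  by split; [rewrite conjc_eq0|exact: cone_conj].
- by rewrite eqxx.
Qed.

End StepS.

Lemma main m : IHprop m.
Proof.
elim: m => [|m IH]; first exact: IH0.
move=> t M ht0 ht hH hP hc hcone.
exact: (step_main IH ht0 ht hH hP hc hcone).
Qed.
End Step.


Section Final.
Variable R : realType.
Local Notation C := R[i].

Lemma irr_conn n (M : 'M[C]_n) : hermitian_mx M -> irreducible_mx M -> conn M.
Proof.
move=> hH hI S S0 ST.
case: (boolP [exists i, [exists j, [&& i \in S, j \notin S & M i j != 0]]]).
  move=> /existsP [i /existsP [j /and3P [h1 h2 h3]]]; by exists i, j.
move=> /existsPn H; exfalso; apply: hI.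
have nocross : forall i j, i \in S -> j \notin S -> M i j = 0.
  move=> i j iS jS; move: (H i) => /existsPn /(_ j); rewrite iS jS /=.
  by move/negbNE/eqP.
have [x0 x0S] := set0Pn _ S0.
set sq := enum S ++ enum (~: S).
have szS : size (enum S) = #|S| by rewrite cardE.
have szC : size (enum (~: S)) = #|~: S| by rewrite cardE.
have sz : size sq = n by rewrite size_cat szS szC cardsC card_ord.
have usq : uniq sq.
  rewrite cat_uniq !enum_uniq andbT /=; apply/hasPn => z.
  by rewrite !mem_enum inE.
pose f (i : 'I_n) := nth x0 sq i.
have finj : injective f.
  move=> i j; rewrite /f => /eqP; rewrite nth_uniq ?sz // => /eqP; exact: ord_inj.
pose s := perm finj.
have key : forall i : 'I_n, (s i \in S) = (i < #|S|)%N.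
  move=> i; rewrite permE /f /sq nth_cat szS.
  case: ltnP => hi.
    by rewrite -mem_enum; apply: mem_nth; rewrite szS.
  have : nth x0 (enum (~: S)) (i - #|S|) \in enum (~: S).
    apply: mem_nth; rewrite szC.
    have := cardsC S; rewrite card_ord => e.
    have := ltn_ord i; lia.
  by rewrite mem_enum inE => /negbTE.
exists s, #|S|; split.
  apply/andP; split; first by rewrite card_gt0.
  have [y yS] : exists y, y \notin S.
    case: (pickP (fun y => y \notin S)) => [y hy|H']; first by exists y.
    exfalso; move/eqP: ST; apply; apply/setP => z; rewrite inE; exact: (negbFE (H' z)).
  have : (0 < #|~: S|)%N by rewrite card_gt0; apply/set0Pn; exists y; rewrite inE.
  have := cardsC S; rewrite card_ord; lia.
move=> i j; rewrite !mxE -!key.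
case: (boolP (s i \in S)) => si; case: (boolP (s j \in S)) => sj //= _.
  by rewrite nocross.
by rewrite (herm_entry _ _ hH) nocross // conjc0.
Qed.

Lemma final_conv (z : C) a b : z != 0 -> cone a z -> 0 <= a -> a < b -> b <= pi ->
  arg_in z (- b) b.
Proof.
move=> nz hz a0 ab bpi; apply: gang_arg_in => //; first by have := a0; lra.
have r0 := nrm_gt0 nz.
have : cos b < cos a.
  rewrite ltr_cos // in_itv /= ?bpi ?a0 //; last by have := a0; lra.
  by apply/andP; split; lra.
move=> h; apply: lt_le_trans hz; by rewrite ltr_pM2r.
Qed.

End Final.

Unset Implicit Arguments.
Set Strict Implicit.
Set Printing Implicit Defensive.

Theorem lemma4 (R : realType) (n : nat) (M : 'M[R[i]]_n) :
  (2 <= n)%N ->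
  hermitian_mx M -> posdef_mx M -> irreducible_mx M ->
  (forall i j : 'I_n, i != j -> M i j != 0 ->
     arg_in (- M i j) (- (pi / 2 ^+ n)) (pi / 2 ^+ n)) ->
  forall i j : 'I_n,
    arg_in (invmx M i j) (- (pi / 2) + pi / 2 ^+ n) (pi / 2 - pi / 2 ^+ n).
Proof.
move=> n2 hH hP hI harg.
case: n M n2 hH hP hI harg => [|m] M // n2 hH hP hI harg.
have m1 : (0 < m)%N by [].
set th := pi / 2 ^+ m.+1 : R.
have pi0 : 0 < pi :> R by exact: pi_gt0.
have p0 : 0 < (2 : R) ^+ m.+1 by rewrite exprn_gt0.
have th0 : 0 < th by rewrite /th divr_gt0.
have thm : 2 ^+ m * th = pi / 2.
  by rewrite /th exprS; field; rewrite expf_neq0 // pnatr_eq0.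
have p2 : 2 <= (2 : R) ^+ m.
  by rewrite -(prednK m1) exprS ler_peMr // exprn_ege1 // ler1n.
pose f (p : 'I_m.+1 * 'I_m.+1) : R :=
  if (p.1 != p.2) && (M p.1 p.2 != 0) then gang (- M p.1 p.2) else 0.
pose th' := \big[Num.max/0]_p f p.
have th'0 : 0 <= th'.
  apply: (big_ind (fun x => 0 <= x)) => //; first by move=> x y hx hy; rewrite le_max hx.
  case=> i j _; rewrite /f /=; case: ifP => // /andP [ij nz].
  by apply: gang_ge0; rewrite oppr_eq0.
have th'lt : th' < th.
  apply: (big_ind (fun x => x < th)) => //.
    by move=> x y hx hy; rewrite gt_max hx hy.
  case=> i j _; rewrite /f /=; case: ifP => // /andP [ij nz].
  exact: arg_in_gang (harg i j ij nz).
have fle : forall p, f p <= th'.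
  by move=> p; rewrite /th' (bigD1 p) //= le_max lexx.
have hcone : forall i j, i != j -> cone th' (- M i j).
  move=> i j ij; case: (eqVneq (M i j) 0) => [->|nz]; first by rewrite oppr0; exact: cone0.
  have nz' : - M i j != 0 by rewrite oppr_eq0.
  apply: (cone_mono (a := gang (- M i j))); [exact: gang_ge0| | |exact: cone_gang].
    by have := fle (i, j); rewrite /f /= ij nz.
  by have := th'lt; have := thm; have := p2; have := pi0; have := th0; nra.
have ht : 2 ^+ m * th' <= pi / 2.
  rewrite -thm; apply: ler_wpM2l; [by rewrite exprn_ge0|exact: ltW].
have hc := irr_conn hH hI.
have Mu := posdef_unit hP.
have XPD := posdef_inv hH hP (mulmxV Mu).
have hb : - (pi / 2) + pi / 2 ^+ m.+1 = - (pi / 2 - th) by rewrite /th; ring.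
move=> i j; rewrite hb.
have bpi : pi / 2 - th <= pi by have := th0; have := pi0; lra.
have thb : 0 < pi / 2 - th.
  have : 2 * th <= 2 ^+ m * th by rewrite ler_wpM2r // ltW.
  by rewrite thm; have := th0; have := pi0; lra.
case: (eqVneq i j) => [<-|ij].
  have [h1 h2] := cone_pos (posdef_diag i XPD).
  exact: final_conv h2 h1 (lexx 0) thb bpi.
have [h1 h2] := main th'0 ht hH hP hc hcone ij.
apply: final_conv h1 h2 _ _ bpi.
  by apply: mulr_ge0 => //; rewrite subr_ge0; apply: le_trans p2; rewrite ler1n.
have : (2 ^+ m - 1) * th' < (2 ^+ m - 1) * th.
  by rewrite ltr_pM2l // subr_gt0; apply: lt_le_trans p2; rewrite ltr1n.
by rewrite [X in _ < X -> _]mulrBl thm mul1r.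
Qed.
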